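(* Let $\mathcal O$ be the suboperad of $\mathrm{CNCB}$ generated by $a:=T_{bbb}$ and $w:=T_{bub}$. Then $\mathcal O$ admits the presentation with generators $a,w$ of arity $2$ and relations $$w\circ_1 w=w\circ_2 w,\qquad a\circ_1 w=a\circ_2 w.$$ That is, $\mathcal O$ is isomorphic, via the morphism sending the generators to $a$ and $w$, to the quotient of the free operad on two binary generators by the operadic congruence generated by these relations.
   Context: For $n\ge2$, a bicoloured noncrossing configuration (BNC) of size $n$ is a regular polygon with vertices $1,\dots,n+1$ clockwise, together with disjoint sets of blue and red arcs among the arcs $(i,j)$, $1\le i<j\le n+1$. The arcs $(i,i+1)$ are the edges ($i$th edge), $(1,n+1)$ is the base, and the others are diagonals. Coloured arcs are pairwise noncrossing ($(i,j),(k,l)$ cross iff $i<k<j<l$ or $k<i<l<j$), and red arcs are diagonals. There is one BNC of size $1$, a blue segment, which is the unit. The operad $\mathrm{CNCB}$ has the BNCs as elements (arity = size). Its composition $\mathfrak C\circ_i\mathfrak D$ ($\mathfrak C$ of size $n$, $\mathfrak D$ of size $m$) glues the base of $\mathfrak D$ on the $i$th edge of $\mathfrak C$. Arcs $(a,b)$ of $\mathfrak C$ become $(\sigma(a),\sigma(b))$ with $\sigma(v)=v$ for $v\le i$ and $v+m-1$ otherwise, and arcs $(a,b)$ of $\mathfrak D$ become $(a+i-1,b+i-1)$, keeping colours. The exception is the arc $(i,i+m)$, which is red if the $i$th edge of $\mathfrak C$ and the base of $\mathfrak D$ are both uncoloured, blue if both are blue, and uncoloured otherwise. For $x,y,z\in\{b,u\}$,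 $T_{xyz}$ denotes the BNC of size $2$ (a triangle with vertices $1,2,3$) whose first edge $(1,2)$ has colour $x$, whose base $(1,3)$ has colour $y$, and whose second edge $(2,3)$ has colour $z$, where $b$ = blue and $u$ = uncoloured. The suboperad generated by a set is the smallest suboperad containing it. *)

(* Defs.v *)
From mathcomp Require Import all_boot.
Set Implicit Arguments. Unset Strict Implicit. Unset Printing Implicit Defensive.

Inductive colour := Blue | Red | Unc.

Definition colour_eqb (x y : colour) : bool :=
  match x, y with
  | Blue, Blue | Red, Red | Unc, Unc => true
  | _, _ => false
  end.

(* A BNC of size n: vertices 1..n+1; [bcol C i j] is the colour of the arc
   (i,j).  Convention: bcol is [Unc] on every pair (i,j) that is not an arc
   1 <= i < j <= n+1, so that two BNCs are equal iff they have the same size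
   and the same colouring of arcs. *)
Record bnc := BNC { bsize : nat; bcol : nat -> nat -> colour }.

Definition arc_ok (n i j : nat) : bool := (1 <= i) && (i < j) && (j <= n.+1).

Definition crossing (i j k l : nat) : bool :=
  ((i < k) && (k < j) && (j < l)) || ((k < i) && (i < l) && (l < j)).

Definition is_diagonal (n i j : nat) : bool :=
  arc_ok n i j && (j != i.+1) && ~~ ((i == 1) && (j == n.+1)).

Definition is_BNC (C : bnc) : Prop :=
  let n := bsize C in let c := bcol C in
  1 <= n /\
  (forall i j, ~~ arc_ok n i j -> c i j = Unc) /\
  (n = 1 -> c 1 2 = Blue) /\
  (forall i j k l, c i j <> Unc -> c k l <> Unc -> ~~ crossing i j k l) /\
  (forall i j, c i j = Red -> is_diagonal n i j).

Definition bnc_unit : bnc :=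
  BNC 1 (fun i j => if (i == 1) && (j == 2) then Blue else Unc).

Definition glue_colour (x y : colour) : colour :=
  match x, y with
  | Unc, Unc => Red
  | Blue, Blue => Blue
  | _, _ => Unc
  end.

(* Partial composition C o_i D (meaningful for 1 <= i <= bsize C). *)
Definition bnc_comp (C : bnc) (i : nat) (D : bnc) : bnc :=
  let n := bsize C in let m := bsize D in
  (* inverse of sigma on the vertices outside the open interval (i, i+m) *)
  let unsig v := if v <= i then v else v - (m - 1) in
  let inside v := (i < v) && (v < i + m) in
  BNC (n + m - 1)
    (fun p q =>
       if (p == i) && (q == i + m) then
         glue_colour (bcol C i i.+1) (bcol D 1 m.+1)
       else if (i <= p) && (q <= i + m) then
         bcol D (p - i).+1 (q - i).+1
       else if inside p || inside q then Unc
       else bcol C (unsig p) (unsig q)).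

(* T_xyz : first edge (1,2) colour x, base (1,3) colour y, second edge (2,3) colour z *)
Definition T (x y z : colour) : bnc :=
  BNC 2 (fun i j =>
    if (i == 1) && (j == 2) then x
    else if (i == 1) && (j == 3) then y
    else if (i == 2) && (j == 3) then z
    else Unc).

Definition bnc_a : bnc := T Blue Blue Blue.
Definition bnc_w : bnc := T Blue Unc Blue.

Inductive in_O : bnc -> Prop :=
  | inO_unit : in_O bnc_unit
  | inO_a : in_O bnc_a
  | inO_w : in_O bnc_w
  | inO_comp C D i : in_O C -> in_O D -> 1 <= i <= bsize C ->
      in_O (bnc_comp C i D).

Inductive gen := GA | GW.

(* planar binary trees with internal nodes labelled by generators;
   arity = number of leaves; Leaf is the operad unit. *)
Inductive tree := Leaf | Node of gen & tree & tree.

Fixpoint arity (t : tree) : nat :=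
  match t with
  | Leaf => 1
  | Node _ l r => arity l + arity r
  end.

Fixpoint graft (t : tree) (i : nat) (s : tree) : tree :=
  match t with
  | Leaf => s
  | Node g l r =>
      if i <= arity l then Node g (graft l i s) r
      else Node g l (graft r (i - arity l) s)
  end.

Definition tgen (g : gen) : tree := Node g Leaf Leaf.

Inductive cong : tree -> tree -> Prop :=
  | cong_rel_w : cong (graft (tgen GW) 1 (tgen GW)) (graft (tgen GW) 2 (tgen GW))
  | cong_rel_a : cong (graft (tgen GA) 1 (tgen GW)) (graft (tgen GA) 2 (tgen GW))
  | cong_refl t : cong t t
  | cong_sym t t' : cong t t' -> cong t' t
  | cong_trans t t' t'' : cong t t' -> cong t' t'' -> cong t t''
  | cong_comp t t' s s' i : cong t t' -> cong s s' -> 1 <= i <= arity t ->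
      cong (graft t i s) (graft t' i s').

(* The operad morphism from the free operad to CNCB sending GA to a and GW to w:
   Node g l r = (g o_2 r) o_1 l in the free operad. *)
Definition gen_val (g : gen) : bnc := match g with GA => bnc_a | GW => bnc_w end.

Fixpoint ev (t : tree) : bnc :=
  match t with
  | Leaf => bnc_unit
  | Node g l r => bnc_comp (bnc_comp (gen_val g) 2 (ev r)) 1 (ev l)
  end.

(* Main.v *)
Require Import Defs.
From mathcomp Require Import all_boot zify.
From Stdlib Require Import FunctionalExtensionality.
Set Implicit Arguments. Unset Strict Implicit. Unset Printing Implicit Defensive.

Definition good (C : bnc) : Prop :=
  1 <= bsize C /\
  (forall p q, ~~ arc_ok (bsize C) p q -> bcol C p q = Unc) /\
  (forall p q, bcol C p q <> Red) /\
  (forall p, 1 <= p <= bsize C -> bcol C p p.+1 = Blue).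

Lemma bnc_ext C D : bsize C = bsize D -> (forall p q, bcol C p q = bcol D p q) -> C = D.
Proof.
case: C => n c; case: D => n' c' /= -> H; congr BNC.
by apply: functional_extensionality => p; apply: functional_extensionality => q.
Qed.

Lemma good_out C p q (HC : good C) : ~~ arc_ok (bsize C) p q -> bcol C p q = Unc.
Proof. by case: HC => _ [H _]; apply: H. Qed.

Lemma comp_col C D i (HC : good C) (HD : good D) (Hi : 1 <= i <= bsize C) p q :
  bcol (bnc_comp C i D) p q =
  if (i <= p) && (q <= i + bsize D) then bcol D (p - i).+1 (q - i).+1
  else if ((i < p) && (p < i + bsize D)) || ((i < q) && (q < i + bsize D)) then Unc
  else bcol C (if p <= i then p else p - (bsize D - 1))
              (if q <= i then q else q - (bsize D - 1)).
Proof.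
rewrite /bnc_comp /=.
case: ifP => [/andP [/eqP -> /eqP ->]|_] //.
case: HC => _ [_ [_ HCe]]; rewrite HCe //.
case: HD => HD1 [_ [HDr _]].
have -> : (i <= i) && (i + bsize D <= i + bsize D) by lia.
have -> : (i - i).+1 = 1 by lia.
have -> : (i + bsize D - i).+1 = (bsize D).+1 by lia.
by case E: (bcol D 1 (bsize D).+1) => //; move: (HDr 1 (bsize D).+1); rewrite E.
Qed.

Lemma good_red C p q : good C -> bcol C p q <> Red.
Proof. by case=> _ [_ [H _]]; apply: H. Qed.
Lemma good_edge C p : good C -> 1 <= p <= bsize C -> bcol C p p.+1 = Blue.
Proof. by case=> _ [_ [_ H]]; apply: H. Qed.
Lemma good_pos C : good C -> 1 <= bsize C.
Proof. by case. Qed.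

Ltac atom b := lazymatch b with
 | ?x && _ => atom x | ?x || _ => atom x | ~~ ?x => atom x | _ => constr:(b) end.
Ltac inner b := let a := atom b in
  lazymatch a with context[if ?c then _ else _] => inner c | _ => constr:(a) end.
Ltac simplb := rewrite ?andTb ?andFb ?orTb ?orFb ?andbT ?andbF ?orbT ?orbF.
Ltac clear_nonatomic := repeat match goal with
 | H: context[if _ then _ else _] |- _ => clear H
 | H: good _ |- _ => clear H end.
Ltac splitall := repeat (match goal with
 | |- context[if ?b then _ else _] => let a := inner b in
      let E := fresh "E" in case E: a; simplb
 | H: context[if ?b then _ else _] |- _ => let a := inner b in
      let E := fresh "E" in move: H; case E: a; simplb => H
end; try (exfalso; clear_nonatomic; lia)).
Ltac outc := match goal with |- context[bcol ?X ?x ?y] =>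
  rewrite (@good_out X x y); [| by assumption | by unfold arc_ok in *; lia] end.
Ltac edgec := match goal with |- bcol ?X ?x ?y = Blue =>
  (try (rewrite (_ : y = x.+1); last lia)); apply: good_edge; [by assumption | lia] end.
Ltac eqc := match goal with |- bcol ?X ?x ?y = bcol ?X ?x' ?y' =>
  case: (boolP (arc_ok (bsize X) x y)) => ?;
  [ f_equal; unfold arc_ok in *; lia | repeat outc; done ] end.
Ltac fin := solve [done | exfalso; lia | f_equal; lia | repeat outc; done | edgec
  | symmetry; edgec | eqc ].

Lemma good_comp C D i : good C -> good D -> 1 <= i <= bsize C -> good (bnc_comp C i D).
Proof.
move=> HC HD Hi; have := good_pos HC; have := good_pos HD => Hd Hc.
split; [rewrite /=; lia|split; [|split]].
- move=> p q Hpq; rewrite comp_col //; move: Hpq; rewrite /arc_ok /= => Hpq; splitall; fin.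
- move=> p q; rewrite comp_col //; splitall => //; apply: good_red; assumption.
- move=> p Hp; rewrite comp_col //; rewrite /= in Hp; splitall; fin.
Qed.

Lemma good_unit : good bnc_unit.
Proof.
split=> //; split; [|split].
- move=> p q; rewrite /arc_ok /=; splitall => //; lia.
- by move=> p q /=; case: ifP.
- move=> p /= Hp; have -> : p = 1 by lia. done.
Qed.

Lemma good_T x y : x <> Red -> y <> Red -> good (T Blue x Blue) /\ good (T Blue y Blue).
Abort.

Lemma good_Tb y : y <> Red -> good (T Blue y Blue).
Proof.
move=> Hy; split=> //; split; [|split].
- move=> p q; rewrite /arc_ok /=; splitall => //; lia.
- by move=> p q /=; splitall.
- move=> p /= Hp; splitall => //; lia.
Qed.

Lemma good_gen g : good (gen_val g).
Proof. by case: g; apply: good_Tb. Qed.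

Lemma comp_unit_l D : good D -> bnc_comp bnc_unit 1 D = D.
Proof.
move=> HD; have Hd := good_pos HD.
apply: bnc_ext => [/=|p q]; first lia.
rewrite comp_col //; [|exact: good_unit]; rewrite /=; splitall; fin.
Qed.

Lemma comp_unit_r C i : good C -> 1 <= i <= bsize C -> bnc_comp C i bnc_unit = C.
Proof.
move=> HC Hi; have Hc := good_pos HC.
apply: bnc_ext => [/=|p q]; first lia.
rewrite comp_col //; [|exact: good_unit]; rewrite /=; splitall; fin.
Qed.

Lemma assoc_seq C D E i j : good C -> good D -> good E ->
  1 <= i <= bsize C -> 1 <= j <= bsize D ->
  bnc_comp (bnc_comp C i D) (i + j - 1) E = bnc_comp C i (bnc_comp D j E).
Proof.
move=> HC HD HE Hi Hj.
have := good_pos HC; have := good_pos HD; have := good_pos HE => He Hd Hc.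
have HCD := good_comp HC HD Hi. have HDE := good_comp HD HE Hj.
apply: bnc_ext => [/=|p q]; first lia.
rewrite (comp_col HCD HE); last by rewrite /=; lia.
rewrite (comp_col HC HDE Hi).
rewrite !(comp_col HC HD Hi) !(comp_col HD HE Hj) /=.
splitall; fin.
Qed.

Lemma assoc_par C D E i j : good C -> good D -> good E ->
  1 <= i -> i < j -> j <= bsize C ->
  bnc_comp (bnc_comp C i D) (j + bsize D - 1) E = bnc_comp (bnc_comp C j E) i D.
Proof.
move=> HC HD HE Hi Hij Hj.
have := good_pos HC; have := good_pos HD; have := good_pos HE => He Hd Hc.
have Hi' : 1 <= i <= bsize C by lia.
have Hj' : 1 <= j <= bsize C by lia.
have HCD := good_comp HC HD Hi'. have HCE := good_comp HC HE Hj'.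
apply: bnc_ext => [/=|p q]; first lia.
rewrite (comp_col HCD HE); last by rewrite /=; lia.
rewrite (comp_col HCE HD); last by rewrite /=; lia.
rewrite !(comp_col HC HD Hi') !(comp_col HC HE Hj') /=.
splitall; fin.
Qed.

Lemma arity_pos t : 1 <= arity t.
Proof. elim: t => //= g l IHl r IHr; lia. Qed.

Lemma size_gen g : bsize (gen_val g) = 2.
Proof. by case: g. Qed.

Lemma ev_good t : good (ev t) /\ bsize (ev t) = arity t.
Proof.
elim: t => [|g l [Gl Sl] r [Gr Sr]]; first by split; [exact: good_unit|].
have Hl := arity_pos l; have Hr := arity_pos r.
have H2 : 1 <= 2 <= bsize (gen_val g) by rewrite size_gen.
have G1 := good_comp (good_gen g) Gr H2.
have H1 : 1 <= 1 <= bsize (bnc_comp (gen_val g) 2 (ev r)).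
  by rewrite /= Sr size_gen; lia.
split; first exact: good_comp G1 Gl H1.
by rewrite /= Sl Sr size_gen; lia.
Qed.

Lemma ev_tgen g : ev (tgen g) = gen_val g.
Proof.
have Gg := good_gen g.
have H2 : 1 <= 2 <= bsize (gen_val g) by rewrite size_gen.
rewrite /= (comp_unit_r Gg H2) comp_unit_r //; rewrite size_gen //.
Qed.

Lemma ev_graft t i s : 1 <= i <= arity t -> ev (graft t i s) = bnc_comp (ev t) i (ev s).
Proof.
elim: t i => [|g l IHl r IHr] i Hi /=.
  have -> : i = 1 by rewrite /= in Hi; lia.
  by rewrite comp_unit_l //; case: (ev_good s).
have [Gl Sl] := ev_good l; have [Gr Sr] := ev_good r; have [Gs Ss] := ev_good s.
have Hl := arity_pos l; have Hr := arity_pos r.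
have Gg := good_gen g.
have H2 : 1 <= 2 <= bsize (gen_val g) by rewrite size_gen.
have G1 := good_comp Gg Gr H2.
have H1 : 1 <= 1 <= bsize (bnc_comp (gen_val g) 2 (ev r)).
  by rewrite /= Sr size_gen; lia.
case: ifP => Hil /=.
  rewrite IHl; last lia.
  have Hj : 1 <= i <= bsize (ev l) by rewrite Sl; rewrite /= in Hi; lia.
  rewrite -(assoc_seq G1 Gl Gs H1 Hj).
  by have -> : 1 + i - 1 = i by lia.
rewrite IHr; last by rewrite /= in Hi; lia.
have Hi' : 1 <= i - arity l <= bsize (ev r) by rewrite Sr /= in Hi *; lia.
rewrite -(assoc_seq Gg Gr Gs H2 Hi').
have Hj1 : 1 < 2 + (i - arity l) - 1 by lia.
have Hj2 : 2 + (i - arity l) - 1 <= bsize (bnc_comp (gen_val g) 2 (ev r)).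
  by rewrite /= Sr size_gen; rewrite /= in Hi; lia.
rewrite -(assoc_par G1 Gl Gs (leqnn 1) Hj1 Hj2).
congr bnc_comp; rewrite Sl; lia.
Qed.

Lemma ev_size t : bsize (ev t) = arity t.
Proof. exact: (ev_good t).2. Qed.

Lemma col_node g l r p q : bcol (ev (Node g l r)) p q =
  if (p == 1) && (q == arity l + arity r + 1) then (if g is GA then Blue else Unc)
  else if q <= arity l + 1 then bcol (ev l) p q
  else if arity l + 1 <= p then bcol (ev r) (p - arity l) (q - arity l)
  else Unc.
Proof.
have [Gl Sl] := ev_good l; have [Gr Sr] := ev_good r.
have Hl := arity_pos l; have Hr := arity_pos r.
have Gg := good_gen g.
have H2 : 1 <= 2 <= bsize (gen_val g) by rewrite size_gen.
have G1 := good_comp Gg Gr H2.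
have H1 : 1 <= 1 <= bsize (bnc_comp (gen_val g) 2 (ev r)).
  by rewrite /= Sr size_gen; lia.
change (ev (Node g l r)) with (bnc_comp (bnc_comp (gen_val g) 2 (ev r)) 1 (ev l)).
rewrite (comp_col G1 Gl H1) !(comp_col Gg Gr H2).
rewrite Sl Sr ?size_gen.
clear G1 H1 H2; case: g Gg => Gg; rewrite /gen_val /bnc_a /bnc_w /T /=; splitall; fin.
Qed.

Definition lnotw (t : tree) : bool := match t with Node GW _ _ => false | _ => true end.
Fixpoint normal (t : tree) : bool :=
  match t with Leaf => true | Node _ l r => [&& normal l, normal r & lnotw l] end.

Lemma base_blue l : lnotw l -> bcol (ev l) 1 (arity l + 1) = Blue.
Proof.
case: l => [|[] x y] // _.
by rewrite col_node /= !eqxx.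
Qed.

Lemma ev_inj t t' : normal t -> normal t' -> ev t = ev t' -> t = t'.
Proof.
elim: t t' => [|g l IHl r IHr] [|g' l' r'] Nt Nt' E //.
- have := congr1 bsize E; rewrite !ev_size /=; have := arity_pos l'; have := arity_pos r'; lia.
- have := congr1 bsize E; rewrite !ev_size /=; have := arity_pos l; have := arity_pos r; lia.
move: Nt Nt' => /= /andP[Nl /andP[Nr Wl]] /andP[Nl' /andP[Nr' Wl']].
have Hs := congr1 bsize E; rewrite !ev_size /= in Hs.
have Hc : forall p q, bcol (ev (Node g l r)) p q = bcol (ev (Node g' l' r')) p q
  by move=> p q; rewrite E.
have Hl := arity_pos l; have Hr := arity_pos r.
have Hl' := arity_pos l'; have Hr' := arity_pos r'.
have [Gl _] := ev_good l; have [Gr _] := ev_good r.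
have [Gl' _] := ev_good l'; have [Gr' _] := ev_good r'.
have Hg : g = g'.
  move: (Hc 1 (arity l + arity r + 1)); rewrite !col_node Hs !eqxx /=.
  by case: g {IHl IHr E Hc}; case: g'.
have Ea : arity l = arity l'.
  case: (ltngtP (arity l) (arity l')) => // Hlt; exfalso.
  - move: (Hc 1 (arity l' + 1)); rewrite !col_node.
    splitall; rewrite ?(base_blue Wl) ?(base_blue Wl') //; try rewrite good_out //;
      try (unfold arc_ok; lia).
  - move: (Hc 1 (arity l + 1)); rewrite !col_node.
    splitall; rewrite ?(base_blue Wl) ?(base_blue Wl') //; try rewrite good_out //;
      try (unfold arc_ok; lia).
have El : ev l = ev l'.
  apply: bnc_ext => [|p q]; first by rewrite !ev_size.
  case: (boolP (arc_ok (arity l) p q)) => Ha; last first.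
    rewrite (good_out Gl) ?ev_size // (good_out Gl') ?ev_size -?Ea //.
  move: (Hc p q); rewrite !col_node -Ea; unfold arc_ok in Ha.
  splitall => //.
have Er : ev r = ev r'.
  apply: bnc_ext => [|p q]; first by rewrite !ev_size; lia.
  have Er' : arity r' = arity r by lia.
  case: (boolP (arc_ok (arity r) p q)) => Ha; last first.
    rewrite (good_out Gr) ?ev_size // (good_out Gr') ?ev_size ?Er' //.
  move: (Hc (p + arity l) (q + arity l)); rewrite !col_node -Ea !addnK; unfold arc_ok in Ha.
  splitall => //.
by rewrite Hg (IHl _ Nl Nl' El) (IHr _ Nr Nr' Er).
Qed.

Lemma cong_node g l l' r r' : cong l l' -> cong r r' -> cong (Node g l r) (Node g l' r').
Proof.
move=> Hl Hr.
have H1 := cong_comp (cong_refl (tgen g)) Hr (i := 2) isT.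
have H2 := cong_comp H1 Hl (i := 1).
apply: H2; rewrite /=; have := arity_pos r; lia.
Qed.

Lemma cong_rot g x y z : cong (Node g (Node GW x y) z) (Node g x (Node GW y z)).
Proof.
have B : cong (Node g (Node GW Leaf Leaf) Leaf) (Node g Leaf (Node GW Leaf Leaf)).
  by case: g; [exact: cong_rel_a | exact: cong_rel_w].
have B3 := cong_comp B (cong_refl z) (i := 3) isT.
have B2 := cong_comp B3 (cong_refl y) (i := 2).
have B1 := cong_comp (B2 _) (cong_refl x) (i := 1).
apply: B1; rewrite /= ?arity_pos //; have := arity_pos z; lia.
Qed.

Lemma normalize_node l g r : normal l -> normal r ->
  exists t', normal t' /\ cong (Node g l r) t'.
Proof.
elim: l g r => [|gl x IHx y IHy] g r Nl Nr.
  by exists (Node g Leaf r); split; [rewrite /= Nr | exact: cong_refl].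
case: gl Nl => Nl.
  by exists (Node g (Node GA x y) r); split; [move: Nl => /= ->; rewrite Nr | exact: cong_refl].
move: Nl => /= /andP [Nx /andP [Ny _]].
have [u [Nu Cu]] := IHy GW r Ny Nr.
have [t' [Nt' Ct']] := IHx g u Nx Nu.
exists t'; split => //.
apply: cong_trans (cong_rot g x y r) _.
apply: cong_trans Ct'.
exact: cong_node (cong_refl x) Cu.
Qed.

Lemma to_normal t : exists t', normal t' /\ cong t t'.
Proof.
elim: t => [|g l [l' [Nl Cl]] r [r' [Nr Cr]]].
  by exists Leaf; split; [|exact: cong_refl].
have [t' [Nt Ct]] := normalize_node g Nl Nr.
exists t'; split => //.
exact: cong_trans (cong_node g Cl Cr) Ct.
Qed.

Lemma rel_ev g : bnc_comp (gen_val g) 1 (gen_val GW) = bnc_comp (gen_val g) 2 (gen_val GW).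
Proof.
have Gw := good_gen GW.
have Gg := good_gen g.
apply: bnc_ext => [|p q]; first by rewrite /= size_gen.
rewrite !(comp_col Gg Gw) ?size_gen //.
case: g Gg => Gg; rewrite /gen_val /bnc_a /bnc_w /T /=; splitall; fin.
Qed.

Lemma cong_ev t t' : cong t t' -> ev t = ev t'.
Proof.
elim => {t t'}.
- apply: (etrans (@ev_graft (tgen GW) 1 (tgen GW) isT)).
  apply: (etrans _ (esym (@ev_graft (tgen GW) 2 (tgen GW) isT))).
  rewrite !ev_tgen.
  exact: (rel_ev GW).
- apply: (etrans (@ev_graft (tgen GA) 1 (tgen GW) isT)).
  apply: (etrans _ (esym (@ev_graft (tgen GA) 2 (tgen GW) isT))).
  rewrite !ev_tgen.
  exact: (rel_ev GA).
- by [].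
- by move=> t t' _ E; rewrite E.
- by move=> t t' t'' _ E1 _ E2; rewrite E1 E2.
- move=> t t' s s' i _ Et _ Es Hi.
  have Hi' : 1 <= i <= arity t' by rewrite -!ev_size -Et ev_size.
  by rewrite (ev_graft s Hi) (ev_graft s' Hi') Et Es.
Qed.

Theorem theorem3p27 :
  (* ev is an operad morphism from the free operad to CNCB *)
  (forall t i s, 1 <= i <= arity t -> ev (graft t i s) = bnc_comp (ev t) i (ev s)) /\
  (* its image is exactly the suboperad O generated by a and w *)
  (forall C : bnc, in_O C <-> exists t, ev t = C) /\
  (* its kernel is exactly the operadic congruence generated by the relations *)
  (forall t t' : tree, ev t = ev t' <-> cong t t').
Proof.
split; first exact: ev_graft.
split.
  move=> C; split.
    elim => [|||C' D i _ [t Ht] _ [s Hs] Hi].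
    - by exists Leaf.
    - by exists (tgen GA); rewrite ev_tgen.
    - by exists (tgen GW); rewrite ev_tgen.
    - exists (graft t i s); rewrite ev_graft ?Ht ?Hs //.
      by rewrite -ev_size Ht.
  case=> t <-; elim: t => [|g l IHl r IHr]; first exact: inO_unit.
  change (in_O (bnc_comp (bnc_comp (gen_val g) 2 (ev r)) 1 (ev l))).
  apply: inO_comp => //; last by rewrite /= size_gen ev_size; have := arity_pos r; lia.
  apply: inO_comp => //; last by rewrite size_gen.
  by case: g; constructor.
move=> t t'; split; last exact: cong_ev.
move=> E.
have [n1 [N1 C1]] := to_normal t; have [n2 [N2 C2]] := to_normal t'.
have E12 : n1 = n2.
  apply: ev_inj N1 N2 _.
  by rewrite -(cong_ev C1) -(cong_ev C2).
apply: cong_trans C1 _; rewrite E12; exact: cong_sym.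
Qed.
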